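(* Let $n\geq 2$ be an integer, $b:=-n+i$, and let $D\subset\{0,1,\ldots,\lfloor n^2/2\rfloor\}$ be such that $|\delta-\delta'|\neq 1$ for all $\delta,\delta'\in\Delta:=D-D$. If $\alpha=\sum_{j\ge1}\alpha_jb^{-j}$ with $\alpha_j\in\Delta$ for all $j$, then $$\underline{\dim}_B\big(C_{n,D}\cap(C_{n,D}+\alpha)\big)=\liminf_{k\to\infty}\frac{\log M_k(\alpha)}{k\log|b|},$$ where $M_k(\alpha):=\prod_{j=1}^k|D\cap(D+\alpha_j)|$.
   Context: $C_{n,D}$ is the attractor of the iterated function system $\{z\mapsto b^{-1}(z+d): d\in D\}$, i.e. $C_{n,D}=\{\sum_{j\ge1}d_jb^{-j}: d_j\in D\}$. $\underline{\dim}_B$ denotes lower box-counting dimension. $D+\alpha_j=\{d+\alpha_j: d\in D\}$. *)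

(* Defs.v *)
From Stdlib Require Import Reals ZArith List Lia.
From Coquelicot Require Import Coquelicot.
Open Scope R_scope.

Definition base (n : nat) : Complex.C := (- INR n, 1)%R.

Definition binvpow (n j : nat) : Complex.C := Cinv (pow_n (K := C_Ring) (base n) j).

(* C_{n,D} = { sum_{j>=1} d_j b^{-j} : d_j in D } ; the sequence d is indexed
   from 1 (d 0 is irrelevant). *)
Definition attractor (n : nat) (D : list nat) (z : Complex.C) : Prop :=
  exists d : nat -> nat,
    (forall j, (1 <= j)%nat -> In (d j) D) /\
    is_series (fun k => Cmult (RtoC (INR (d (S k)))) (binvpow n (S k))) z.

Definition in_diffset (D : list nat) (x : Z) : Prop :=
  exists d d', In d D /\ In d' D /\ x = (Z.of_nat d - Z.of_nat d')%Z.

Definition card_inter_shift (D : list nat) (a : Z) : nat :=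
  length (filter (fun d => existsb (fun d' => Z.eqb (Z.of_nat d) (Z.of_nat d' + a)) D) D).

Fixpoint Mk (D : list nat) (alpha : nat -> Z) (k : nat) : nat :=
  match k with
  | O => 1%nat
  | S k' => (Mk D alpha k' * card_inter_shift D (alpha k))%nat
  end.

Definition covered_by (F : Complex.C -> Prop) (m : nat) (delta : R) : Prop :=
  exists U : nat -> Complex.C -> Prop,
    (forall i, (i < m)%nat -> forall x y, U i x -> U i y -> Cmod (Cminus x y) <= delta) /\
    (forall z, F z -> exists i, (i < m)%nat /\ U i z).

(* N_delta(F): smallest number of sets of diameter at most delta covering F
   (+oo if there is none). *)
Definition cover_number (F : Complex.C -> Prop) (delta : R) : Rbar :=
  Glb_Rbar (fun r => exists m : nat, r = INR m /\ covered_by F m delta).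

Definition box_ratio (F : Complex.C -> Prop) (delta : R) : R :=
  ln (real (cover_number F delta)) / (- ln delta).

(* lower box dimension: liminf_{delta -> 0+} log N_delta(F) / (- log delta),
   written as sup_{eps>0} inf_{0<delta<eps} of the ratio. *)
Definition lower_box_dim (F : Complex.C -> Prop) : Rbar :=
  Lub_Rbar (fun y => exists eps, 0 < eps /\
     Rbar_le (Finite y) (Glb_Rbar (fun r => exists delta, 0 < delta < eps /\ r = box_ratio F delta))).

(* Main.v *)
Require Import Defs.
From Stdlib Require Import Reals ZArith List Lia Lra Classical IndefiniteDescription.
From Coquelicot Require Import Coquelicot.
Open Scope R_scope.

Lemma arch_k (T : R) : exists N : nat, forall k : nat, (N <= k)%nat -> T < INR k.
Proof.
  destruct (INR_unbounded T) as [N HN]. exists N. intros k Hk.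
  apply le_INR in Hk. lra.
Qed.

Lemma covered_mono F m d1 d2 : covered_by F m d1 -> d1 <= d2 -> covered_by F m d2.
Proof.
  intros [U [H1 H2]] Hd. exists U. split; auto.
  intros i Hi x y Hx Hy. specialize (H1 i Hi x y Hx Hy). lra.
Qed.

Lemma bracket (rho delta : R) : 1 < rho -> 0 < delta < 1 ->
  exists k : nat, / rho ^ (S k) <= delta < / rho ^ k.
Proof.
  intros Hr Hd.
  assert (Hex : exists m : nat, / rho ^ m <= delta).
  { destruct (arch_k ((ln 1 - ln delta) / ln rho)) as [N HN].
    exists N. specialize (HN N (le_n _)).
    assert (Hl : 0 < ln rho) by (rewrite <- ln_1; apply ln_increasing; lra).
    assert (HpN : 0 < rho ^ N) by (apply pow_lt; lra).
    apply Rlt_le. apply ln_lt_inv; auto. apply Rinv_0_lt_compat; auto.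
    lra. rewrite ln_Rinv; auto. rewrite ln_pow; try lra.
    rewrite ln_1 in HN. apply Rlt_div_l in HN; auto. lra. }
  destruct Hex as [m Hm]. induction m as [|m IH].
  - simpl in Hm. rewrite Rinv_1 in Hm. lra.
  - destruct (Rle_lt_dec (/ rho ^ m) delta) as [H|H].
    + apply IH; auto.
    + exists m. split; auto.
Qed.

Lemma glb_finite (S : R -> Prop) (x0 lo : R) :
  S x0 -> (forall x, S x -> lo <= x) ->
  exists g, Glb_Rbar S = Finite g /\ lo <= g /\ (forall x, S x -> g <= x) /\
   (forall b, (forall x, S x -> b <= x) -> b <= g).
Proof.
  intros H0 Hlo. destruct (Glb_Rbar_correct S) as [Hlb Hgr].
  assert (A1 := Hlb x0 H0).
  assert (A2 : Rbar_le lo (Glb_Rbar S)) by (apply Hgr; intros x Hx; simpl; auto).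
  destruct (Glb_Rbar S) as [g| |] eqn:E; simpl in A1, A2; try contradiction.
  exists g. split; auto. split; auto. split.
  - intros x Hx. specialize (Hlb x Hx). simpl in Hlb. auto.
  - intros b Hb. assert (A3 : Rbar_le b (Finite g)) by (apply Hgr; intros x Hx; simpl; auto).
    simpl in A3. auto.
Qed.

Lemma dim_abstract (F : C -> Prop) (M : nat -> nat) (rho K Q : R) :
  1 < rho -> 0 < K -> 1 <= Q ->
  (forall k, (1 <= M k)%nat) ->
  (forall k, INR (M k) <= Q ^ k) ->
  (forall k, covered_by F (M k) (K / rho ^ k)) ->
  (forall k m delta, delta < / rho ^ k -> covered_by F m delta -> (M k <= m)%nat) ->
  lower_box_dim F = LimInf_seq (fun k => ln (INR (M k)) / (INR k * ln rho)).
Proof.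
  intros Hr HK HQ HM1 HMQ Hcov Hlow.
  assert (Hl : 0 < ln rho) by (rewrite <- ln_1; apply ln_increasing; lra).
  set (c := fun k => ln (INR (M k)) / (INR k * ln rho)).
  set (C0 := ln Q / ln rho).
  assert (HlQ : 0 <= ln Q) by (rewrite <- ln_1; apply ln_le; lra).
  assert (HM1' : forall k, 1 <= INR (M k)) by (intro k; apply (le_INR 1); auto).
  assert (HlnM : forall k, 0 <= ln (INR (M k))) by (intro k; rewrite <- ln_1; apply ln_le; auto; lra).
  assert (HlnMk : forall k, ln (INR (M k)) = c k * (INR k * ln rho)).
  { intro k. unfold c. destruct k as [|k].
    - assert (H0 := HMQ 0%nat). simpl in H0. assert (INR (M 0%nat) = 1) by (specialize (HM1' 0%nat); lra).
      rewrite H, ln_1. simpl. lra.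
    - field. split; [lra | apply not_0_INR; lia]. }
  assert (Hc0 : forall k, 0 <= c k).
  { intro k. unfold c. destruct k as [|k].
    - simpl. rewrite Rmult_0_l, Rdiv_0_r. lra.
    - apply Rdiv_le_0_compat; auto. apply Rmult_lt_0_compat; auto. apply lt_0_INR; lia. }
  assert (HcC : forall k, c k <= C0).
  { intro k. unfold c, C0. destruct k as [|k].
    - simpl. rewrite Rmult_0_l, Rdiv_0_r. apply Rdiv_le_0_compat; auto.
    - assert (Hp : 0 < INR (S k) * ln rho) by (apply Rmult_lt_0_compat; auto; apply lt_0_INR; lia).
      apply Rle_div_l; auto.
      assert (ln (INR (M (S k))) <= INR (S k) * ln Q).
      { rewrite <- ln_pow; try lra. apply ln_le; [specialize (HM1' (S k)); lra | apply HMQ]. }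
      replace (ln Q / ln rho * (INR (S k) * ln rho)) with (INR (S k) * ln Q) by (field; lra). auto. }
  destruct (ex_LimInf_seq c) as [Lr HL].
  rewrite (is_LimInf_seq_unique _ _ HL).
  destruct Lr as [L| |].
  2:{ exfalso. destruct (HL C0) as [N HN]. specialize (HN N (le_n _)). specialize (HcC N). lra. }
  2:{ exfalso. destruct (HL 0 0%nat) as [k [_ Hk]]. specialize (Hc0 k). lra. }
  simpl in HL.
  assert (HL0 : 0 <= L).
  { destruct (Rle_lt_dec 0 L) as [H|H]; auto. exfalso.
    assert (He : 0 < - L) by lra. destruct (HL (mkposreal _ He)) as [H1 _].
    destruct (H1 0%nat) as [k [_ Hk]]. simpl in Hk. specialize (Hc0 k). lra. }
  assert (CN : forall delta, 0 < delta -> exists g,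
    cover_number F delta = Finite g /\ 0 <= g /\
    (forall k, K / rho ^ k <= delta -> g <= INR (M k)) /\
    (forall k, delta < / rho ^ k -> INR (M k) <= g)).
  { intros delta Hd.
    assert (Hex : exists k, K / rho ^ k <= delta).
    { destruct (arch_k ((ln K - ln delta) / ln rho)) as [N HN].
      exists N. specialize (HN N (le_n _)).
      assert (HpN : 0 < rho ^ N) by (apply pow_lt; lra).
      apply Rlt_le. apply ln_lt_inv; auto. apply Rdiv_lt_0_compat; auto.
      rewrite ln_div; auto. rewrite ln_pow; try lra.
      apply Rlt_div_l in HN; auto. lra. }
    destruct Hex as [k0 Hk0].
    destruct (glb_finite (fun r => exists m : nat, r = INR m /\ covered_by F m delta) (INR (M k0)) 0)
      as [g [Hg1 [Hg2 [Hg3 Hg4]]]].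
    - exists (M k0). split; auto. eapply covered_mono; eauto.
    - intros x [m [-> _]]. apply pos_INR.
    - exists g. unfold cover_number. rewrite Hg1. split; auto. split; auto. split.
      + intros k Hk. apply Hg3. exists (M k). split; auto. eapply covered_mono; eauto.
      + intros k Hk. apply Hg4. intros x [m [-> Hm]]. apply le_INR. eapply Hlow; eauto. }
  assert (UP : forall eps eta, 0 < eps -> 0 < eta -> exists delta, 0 < delta < eps /\
      box_ratio F delta <= L + eta).
  { intros eps eta He Heta.
    destruct (arch_k (Rmax 1 (Rmax ((ln K - ln (Rmin eps 1)) / ln rho)
        (2 * (L + eta) * Rabs (ln K) / eta / ln rho)))) as [N0 HN0].
    assert (Heta2 : 0 < eta / 2) by lra.
    destruct (proj1 (HL (mkposreal _ Heta2)) N0) as [k [Hk Hck]]. simpl in Hck.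
    specialize (HN0 k Hk).
    assert (Hk1 : 1 < INR k) by (eapply Rle_lt_trans; [apply Rmax_l|]; eauto).
    assert (Hk2 : (ln K - ln (Rmin eps 1)) / ln rho < INR k)
      by (eapply Rle_lt_trans; [eapply Rle_trans; [|apply Rmax_r]; apply Rmax_l|]; eauto).
    assert (Hk3 : 2 * (L + eta) * Rabs (ln K) / eta / ln rho < INR k)
      by (eapply Rle_lt_trans; [eapply Rle_trans; [|apply Rmax_r]; apply Rmax_r|]; eauto).
    set (X := INR k * ln rho).
    assert (HX : 0 < X) by (unfold X; apply Rmult_lt_0_compat; lra).
    assert (Hk2' : ln K - ln (Rmin eps 1) < X).
    { unfold X. apply (proj1 (Rlt_div_l _ _ _ Hl)) in Hk2. lra. }
    assert (Hk3' : 2 * (L + eta) * Rabs (ln K) < X * eta).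
    { unfold X. apply (proj1 (Rlt_div_l _ _ _ Hl)) in Hk3. apply (proj1 (Rlt_div_l _ _ _ Heta)) in Hk3. lra. }
    assert (HpN : 0 < rho ^ k) by (apply pow_lt; lra).
    assert (Hmin : 0 < Rmin eps 1) by (apply Rmin_pos; lra).
    assert (Hlnd : ln (K / rho ^ k) = ln K - X).
    { unfold X. rewrite ln_div, ln_pow; auto; lra. }
    assert (Hdlt : K / rho ^ k < Rmin eps 1).
    { apply ln_lt_inv; auto. apply Rdiv_lt_0_compat; auto. rewrite Hlnd. lra. }
    exists (K / rho ^ k). split. split. apply Rdiv_lt_0_compat; auto.
    eapply Rlt_le_trans; eauto. apply Rmin_l.
    destruct (CN (K / rho ^ k)) as [g [Hg1 [Hg2 [Hg3 Hg4]]]]. apply Rdiv_lt_0_compat; auto.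
    unfold box_ratio. rewrite Hg1. simpl.
    assert (Hg5 := Hg3 k (Rle_refl _)).
    assert (Hg6 : INR (M 0%nat) <= g). { apply Hg4. simpl. rewrite Rinv_1.
      eapply Rlt_le_trans; eauto. apply Rmin_r. }
    assert (Hg7 : 1 <= g) by (specialize (HM1' 0%nat); lra).
    assert (Hlg : ln g <= ln (INR (M k))) by (apply ln_le; lra).
    rewrite HlnMk in Hlg. fold X in Hlg.
    rewrite Hlnd.
    assert (HlnK : ln K < X). { assert (Rmin eps 1 <= 1) by apply Rmin_r.
      assert (ln (Rmin eps 1) <= 0) by (rewrite <- ln_1; apply ln_le; lra). lra. }
    apply Rle_div_l. lra.
    assert (c k * X <= (L + eta / 2) * X) by (apply Rmult_le_compat_r; lra).
    assert ((L + eta) * ln K <= eta / 2 * X).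
    { assert ((L + eta) * ln K <= (L + eta) * Rabs (ln K)).
      { apply Rmult_le_compat_l. lra. apply Rle_abs. }
      lra. }
    nra. }
  assert (LOW : forall eta, 0 < eta -> exists eps, 0 < eps /\ forall delta, 0 < delta < eps ->
     L - eta <= box_ratio F delta).
  { intros eta Heta.
    assert (Heta2 : 0 < eta / 2) by lra.
    destruct (proj2 (HL (mkposreal _ Heta2))) as [N1 HN1]. simpl in HN1.
    destruct (arch_k (2 * L / eta)) as [N3 HN3].
    set (N2 := S (Nat.max N1 N3)).
    assert (HpN : 0 < rho ^ N2) by (apply pow_lt; lra).
    exists (/ rho ^ N2). split. apply Rinv_0_lt_compat; auto.
    intros delta Hd.
    assert (Hrn : 1 <= rho ^ N2) by (apply pow_R1_Rle; lra).
    assert (Hd1 : delta < 1). { assert (/ rho ^ N2 <= 1).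
      { rewrite <- Rinv_1. apply Rinv_le_contravar; lra. } lra. }
    destruct (bracket rho delta Hr (conj (proj1 Hd) Hd1)) as [k [Hk1 Hk2]].
    assert (HkN : (N2 <= k)%nat).
    { destruct (le_lt_dec N2 k) as [H|H]; auto. exfalso.
      assert (rho ^ S k <= rho ^ N2) by (apply Rle_pow; lia || lra).
      assert (/ rho ^ N2 <= / rho ^ S k) by (apply Rinv_le_contravar; auto; apply pow_lt; lra).
      lra. }
    destruct (CN delta (proj1 Hd)) as [g [Hg1 [Hg2 [Hg3 Hg4]]]].
    unfold box_ratio. rewrite Hg1. simpl.
    assert (Hg5 := Hg4 k Hk2).
    assert (Hlg : ln (INR (M k)) <= ln g) by (apply ln_le; auto; specialize (HM1' k); lra).
    assert (Hpk : 0 < rho ^ S k) by (apply pow_lt; lra).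
    assert (Hlnd1 : ln delta < 0) by (rewrite <- ln_1; apply ln_increasing; lra).
    assert (Hlnd2 : - ln delta <= INR (S k) * ln rho).
    { assert (ln (/ rho ^ S k) <= ln delta) by (apply ln_le; auto; apply Rinv_0_lt_compat; auto).
      rewrite ln_Rinv, ln_pow in H; auto; lra. }
    apply Rle_div_r. lra.
    destruct (Rle_lt_dec (L - eta) 0) as [Hneg|Hpos].
    { assert (0 <= ln g) by (specialize (HlnM k); lra). nra. }
    assert (Hck : L - eta / 2 < c k) by (apply HN1; lia).
    assert (HkL : 2 * L / eta < INR k) by (apply HN3; lia).
    apply Rlt_div_l in HkL; auto.
    rewrite HlnMk in Hlg. rewrite S_INR in Hlnd2.
    assert (HX : 0 < INR k * ln rho) by (apply Rmult_lt_0_compat; auto; apply lt_0_INR; lia).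
    assert ((L - eta / 2) * (INR k * ln rho) <= c k * (INR k * ln rho)) by (apply Rmult_le_compat_r; lra).
    assert ((L - eta) * (- ln delta) <= (L - eta) * ((INR k + 1) * ln rho)) by (apply Rmult_le_compat_l; lra).
    nra. }
  unfold lower_box_dim.
  destruct (Lub_Rbar_correct (fun y => exists eps, 0 < eps /\
     Rbar_le (Finite y) (Glb_Rbar (fun r => exists delta, 0 < delta < eps /\ r = box_ratio F delta))))
    as [Hub Hleast].
  apply Rbar_le_antisym.
  - apply Hleast. intros y [eps [He Hy]]. simpl.
    apply le_epsilon. intros eta Heta.
    destruct (UP eps eta He Heta) as [delta [Hd Hr']].
    destruct (Glb_Rbar_correct (fun r => exists delta, 0 < delta < eps /\ r = box_ratio F delta)) as [Hlb _].
    assert (Hq := Hlb (box_ratio F delta) (ex_intro _ delta (conj Hd eq_refl))).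
    destruct (Glb_Rbar _); simpl in Hy, Hq; try contradiction; lra.
  - destruct (Lub_Rbar _) as [l| |] eqn:El; simpl; auto.
    + apply le_epsilon. intros eta Heta.
      destruct (LOW eta Heta) as [eps [He Heps]].
      assert (Hin : Rbar_le (L - eta) (Finite l)).
      { apply Hub. exists eps. split; auto.
        destruct (Glb_Rbar_correct (fun r => exists delta, 0 < delta < eps /\ r = box_ratio F delta)) as [_ Hg].
        apply Hg. intros x [delta [Hd ->]]. simpl. apply Heps; auto. }
      simpl in Hin. lra.
    + destruct (LOW 1 Rlt_0_1) as [eps [He Heps]].
      assert (Hin : Rbar_le (L - 1) m_infty).
      { apply Hub. exists eps. split; auto.
        destruct (Glb_Rbar_correct (fun r => exists delta, 0 < delta < eps /\ r = box_ratio F delta)) as [_ Hg].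
        apply Hg. intros x [delta [Hd ->]]. simpl. apply Heps; auto. }
      simpl in Hin. auto.
Qed.

Definition rho (n : nat) : R := Cmod (base n).
Definition powb (n j : nat) : C := pow_n (K := C_Ring) (base n) j.

Lemma powb_S n j : powb n (S j) = Cmult (base n) (powb n j).
Proof. reflexivity. Qed.
Lemma powb_0 n : powb n 0 = RtoC 1.
Proof. reflexivity. Qed.

Lemma base_nz n : base n <> RtoC 0.
Proof. unfold base, RtoC. intro H. injection H. lra. Qed.

Lemma rho_gt n : (2 <= n)%nat -> INR n < rho n.
Proof.
  intro Hn. unfold rho, Cmod, base. simpl.
  assert (H2 : 2 <= INR n) by (apply (le_INR 2) in Hn; simpl in Hn; lra).
  rewrite <- (sqrt_pow2 (INR n)) at 1 by lra.
  apply sqrt_lt_1_alt. split. nra. nra.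
Qed.

Lemma rho_sq n : rho n ^ 2 = INR n ^ 2 + 1.
Proof.
  unfold rho, Cmod, base. cbn [fst snd]. rewrite pow2_sqrt. ring. nra.
Qed.

Lemma Cmod_powb n j : Cmod (powb n j) = rho n ^ j.
Proof.
  induction j as [|j IH].
  - rewrite powb_0. simpl. rewrite Cmod_R, Rabs_R1. reflexivity.
  - rewrite powb_S, Cmod_mult, IH. reflexivity.
Qed.

Lemma powb_nz n j : powb n j <> RtoC 0.
Proof.
  intro H. assert (Cmod (powb n j) = 0) by (rewrite H; apply Cmod_0).
  rewrite Cmod_powb in H0. unfold rho in H0.
  assert (0 < Cmod (base n)) by (apply Cmod_gt_0; apply base_nz).
  revert H0. apply pow_nonzero. lra.
Qed.

Lemma binvpow_eq n j : binvpow n j = Cinv (powb n j).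
Proof. reflexivity. Qed.

Lemma Cmod_binv n j : Cmod (binvpow n j) = / rho n ^ j.
Proof. rewrite binvpow_eq, Cmod_inv, Cmod_powb. reflexivity. apply powb_nz. Qed.

Lemma b_binv n j : Cmult (base n) (binvpow n (S j)) = binvpow n j.
Proof.
  rewrite !binvpow_eq, powb_S. assert (H1 := base_nz n). assert (H2 := powb_nz n j).
  field. split; auto.
Qed.

Lemma binv_0 n : binvpow n 0 = RtoC 1.
Proof. rewrite binvpow_eq, powb_0. apply injective_projections; simpl; field. Qed.

Lemma powb_binv n j : Cmult (powb n j) (binvpow n j) = RtoC 1.
Proof. rewrite binvpow_eq. field. apply powb_nz. Qed.

Fixpoint csum (u : nat -> C) (m : nat) : C :=
  match m with O => RtoC 0 | S m' => Cplus (csum u m') (u m') end.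

Fixpoint rsum (u : nat -> R) (m : nat) : R :=
  match m with O => 0 | S m' => rsum u m' + u m' end.

Lemma sum_n_csum (u : nat -> C) m : sum_n u m = csum u (S m).
Proof.
  induction m as [|m IH].
  - rewrite sum_O. simpl. apply injective_projections; simpl; ring.
  - unfold sum_n in *. rewrite sum_n_Sm by lia. rewrite IH. reflexivity.
Qed.

Lemma series_conv (u : nat -> C) (l : C) : is_series u l ->
  forall eps, 0 < eps -> exists N, forall m, (N <= m)%nat -> Cmod (Cminus l (csum u m)) < eps.
Proof.
  intros H eps He.
  destruct (proj1 (filterlim_locally_ball_norm _ _) H (mkposreal _ He)) as [N HN].
  exists (S N). intros m Hm. destruct m as [|m]. lia.
  specialize (HN m ltac:(lia)). unfold ball_norm in HN. simpl in HN.
  rewrite <- sum_n_csum. rewrite <- Cmod_opp.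
  replace (Copp (Cminus l (sum_n u m))) with (minus (sum_n u m) l). exact HN.
  unfold minus, plus, opp. simpl. apply injective_projections; simpl; ring.
Qed.

Lemma Im_le_Cmod (z : C) : Rabs (Im z) <= Cmod z.
Proof. eapply Rle_trans; [apply Rmax_r|apply Rmax_Cmod]. Qed.

Lemma powb_binv_add n p j : Cmult (powb n p) (binvpow n (p + j)) = binvpow n j.
Proof.
  induction p as [|p IH].
  - rewrite powb_0. simpl. apply injective_projections; simpl; ring.
  - rewrite powb_S. simpl plus. rewrite <- IH. rewrite <- (b_binv n (p + j)).
    apply injective_projections; simpl; ring.
Qed.

Lemma powb_binv_sub n p j : Cmult (powb n (p + j)) (binvpow n p) = powb n j.
Proof.
  induction p as [|p IH].
  - rewrite binv_0. simpl. apply injective_projections; simpl; ring.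
  - change (S p + j)%nat with (S (p + j)). rewrite powb_S. rewrite <- IH. rewrite <- (b_binv n p).
    apply injective_projections; simpl; ring.
Qed.

Lemma rsum_add (f : nat -> R) p m : rsum f (p + m) = rsum f p + rsum (fun k => f (p + k)%nat) m.
Proof.
  induction m as [|m IH].
  - rewrite Nat.add_0_r. simpl. ring.
  - rewrite Nat.add_succ_r. simpl. rewrite IH. ring.
Qed.

Lemma rsum_le (f g : nat -> R) m : (forall k, f k <= g k) -> rsum f m <= rsum g m.
Proof. intro H. induction m; simpl. lra. specialize (H m). lra. Qed.

Lemma rsum_abs (f : nat -> R) m : Rabs (rsum f m) <= rsum (fun k => Rabs (f k)) m.
Proof.
  induction m; simpl. rewrite Rabs_R0. lra.
  eapply Rle_trans. apply Rabs_triang. lra.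
Qed.

Lemma rsum_nonneg (f : nat -> R) m : (forall k, 0 <= f k) -> 0 <= rsum f m.
Proof. intro H. induction m; simpl. lra. specialize (H m). lra. Qed.

Lemma rsum_scal (f : nat -> R) c m : rsum (fun k => c * f k) m = c * rsum f m.
Proof. induction m; simpl. ring. rewrite IHm. ring. Qed.

Lemma rsum_geom q m : 0 <= q < 1 -> rsum (fun k => q ^ k) m <= / (1 - q).
Proof.
  intro Hq. assert (H : (1 - q) * rsum (fun k => q ^ k) m = 1 - q ^ m).
  { induction m; simpl. ring. rewrite Rmult_plus_distr_l, IHm. ring. }
  assert (0 <= q ^ m) by (apply pow_le; lra).
  apply (Rmult_le_reg_l (1 - q)). lra. rewrite H. rewrite Rinv_r; lra.
Qed.

Lemma Im_binv1 n : Im (binvpow n 1) = - 1 / (INR n ^ 2 + 1).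
Proof.
  rewrite binvpow_eq. unfold powb. simpl. unfold Cinv. simpl. field.
  assert (0 <= INR n) by apply pos_INR. nra.
Qed.

Lemma Im_binv2 n : Im (binvpow n 2) = 2 * INR n / (INR n ^ 2 + 1) ^ 2.
Proof.
  rewrite binvpow_eq. unfold powb. simpl. unfold Cinv. simpl. field.
  assert (0 <= INR n) by apply pos_INR. nra.
Qed.

Lemma Jbound n m : (2 <= n)%nat ->
  rsum (fun k => Rabs (Im (binvpow n (S k)))) m <=
  1 / (INR n ^ 2 + 1) + 2 * INR n / (INR n ^ 2 + 1) ^ 2 + 1 / (INR n ^ 2 * (INR n - 1)).
Proof.
  intro Hn. set (x := INR n).
  assert (Hx : 2 <= x) by (unfold x; apply (le_INR 2) in Hn; simpl in Hn; lra).
  set (f := fun k => Rabs (Im (binvpow n (S k)))).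
  assert (Hf0 : forall k, 0 <= f k) by (intro; apply Rabs_pos).
  assert (H1 : rsum f m <= rsum f (m + 2)).
  { rewrite rsum_add. assert (0 <= rsum (fun k => f (m + k)%nat) 2) by (apply rsum_nonneg; auto). lra. }
  eapply Rle_trans. apply H1. rewrite Nat.add_comm, rsum_add.
  assert (E2 : rsum f 2 = 1 / (x ^ 2 + 1) + 2 * x / (x ^ 2 + 1) ^ 2).
  { simpl. unfold f. rewrite Im_binv1, Im_binv2. fold x.
    assert (A : -1 / (x ^ 2 + 1) = - (1 / (x ^ 2 + 1))) by (field; nra).
    rewrite A, Rabs_Ropp, !Rabs_right. field; nra.
    apply Rle_ge, Rdiv_le_0_compat; nra.
    apply Rle_ge, Rdiv_le_0_compat; nra. }
  rewrite E2.
  assert (Ht : rsum (fun k => f (2 + k)%nat) m <= 1 / (x ^ 2 * (x - 1))).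
  { eapply Rle_trans.
    apply rsum_le with (g := fun k => (/ x) ^ 3 * (/ x) ^ k).
    { intro k. unfold f. eapply Rle_trans. apply Im_le_Cmod. rewrite Cmod_binv.
      rewrite <- pow_add. rewrite pow_inv.
      apply Rinv_le_contravar. apply pow_lt; lra.
      apply pow_incr. split. lra. apply Rlt_le. apply rho_gt; auto. }
    rewrite rsum_scal. eapply Rle_trans.
    apply Rmult_le_compat_l. apply pow_le. apply Rlt_le, Rinv_0_lt_compat; lra.
    apply rsum_geom. split. apply Rlt_le, Rinv_0_lt_compat; lra.
    rewrite <- Rinv_1. apply Rinv_lt_contravar; lra.
    right. field. lra. }
  lra.
Qed.

Definition Jb (n : nat) : R :=
  1 / (INR n ^ 2 + 1) + 2 * INR n / (INR n ^ 2 + 1) ^ 2 + 1 / (INR n ^ 2 * (INR n - 1)).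

Definition eterm (n : nat) (e : nat -> Z) (k : nat) : C :=
  Cmult (RtoC (IZR (e (S k)))) (binvpow n (S k)).

Lemma Im_csum n e c m :
  Im (Cmult c (csum (eterm n e) m)) =
  rsum (fun k => IZR (e (S k)) * Im (Cmult c (binvpow n (S k)))) m.
Proof.
  induction m as [|m IH]; cbn [csum rsum].
  - simpl. ring.
  - rewrite <- IH. unfold eterm. destruct c, (csum _ m), (binvpow n (S m)). simpl. ring.
Qed.

Lemma Im_head n e p : is_series (eterm n e) (RtoC 0) ->
  forall eps, 0 < eps -> exists N, forall m, (N <= m)%nat ->
  Rabs (Im (Cmult (powb n p) (csum (eterm n e) m))) < eps.
Proof.
  intros Hs eps He.
  assert (Hp : 0 < Cmod (powb n p)) by (apply Cmod_gt_0, powb_nz).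
  destruct (series_conv _ _ Hs (eps / Cmod (powb n p))) as [N HN].
  apply Rdiv_lt_0_compat; auto.
  exists N. intros m Hm. specialize (HN m Hm).
  eapply Rle_lt_trans. apply Im_le_Cmod. rewrite Cmod_mult.
  assert (E : Cminus (RtoC 0) (csum (eterm n e) m) = Copp (csum (eterm n e) m)).
  { apply injective_projections; simpl; ring. }
  rewrite E, Cmod_opp in HN.
  apply Rlt_div_r in HN; auto. lra.
Qed.

Definition ehyp (n : nat) (e : nat -> Z) : Prop :=
  forall j, (1 <= j)%nat -> (Z.abs (e j) <= Z.of_nat (n * n))%Z /\ Z.abs (e j) <> 1%Z.

Lemma ehyp_R n e j : ehyp n e -> (1 <= j)%nat -> Rabs (IZR (e j)) <= INR n ^ 2.
Proof.
  intros H Hj. destruct (H j Hj) as [H1 _]. rewrite <- abs_IZR.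
  apply IZR_le in H1. rewrite <- INR_IZR_INZ, mult_INR in H1. simpl. lra.
Qed.

Lemma Im_tail n e p m : (2 <= n)%nat -> ehyp n e ->
  Rabs (rsum (fun k => IZR (e (S (p + k)))%nat * Im (Cmult (powb n p) (binvpow n (S (p + k))))) m)
  <= INR n ^ 2 * Jb n.
Proof.
  intros Hn He. eapply Rle_trans. apply rsum_abs.
  eapply Rle_trans. apply rsum_le with (g := fun k => INR n ^ 2 * Rabs (Im (binvpow n (S k)))).
  - intro k. rewrite <- Nat.add_succ_r, powb_binv_add. rewrite Rabs_mult.
    apply Rmult_le_compat_r. apply Rabs_pos. apply ehyp_R; auto. lia.
  - rewrite rsum_scal. apply Rmult_le_compat_l. apply pow_le, pos_INR. apply Jbound; auto.
Qed.

Lemma Im_powb1 n : Im (powb n 1) = 1.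
Proof. unfold powb. simpl. ring. Qed.
Lemma Im_powb2 n : Im (powb n 2) = - 2 * INR n.
Proof. unfold powb. simpl. ring. Qed.
Lemma Im_powb0 n : Im (powb n 0) = 0.
Proof. unfold powb. simpl. ring. Qed.

Lemma Jb_bound3 n : (3 <= n)%nat -> INR n ^ 2 * Jb n <= 1.94.
Proof.
  intro Hn. unfold Jb. set (x := INR n).
  assert (Hx : 3 <= x) by (unfold x; apply (le_INR 3) in Hn; simpl in Hn; lra).
  assert (E : x ^ 2 * (1 / (x ^ 2 + 1) + 2 * x / (x ^ 2 + 1) ^ 2 + 1 / (x ^ 2 * (x - 1)))
     = x ^ 2 / (x ^ 2 + 1) + 2 * x ^ 3 / (x ^ 2 + 1) ^ 2 + 1 / (x - 1)).
  { field. split; nra. }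
  rewrite E. clear E.
  destruct (Nat.eq_dec n 3) as [->|Hn3].
  - unfold x. simpl. lra.
  - assert (Hx4 : 4 <= x) by (unfold x; assert (H4 : (4 <= n)%nat) by lia; apply (le_INR 4) in H4; simpl in H4; lra).
    assert (A1 : x ^ 2 / (x ^ 2 + 1) <= 1) by (apply Rle_div_l; nra).
    assert (A2 : 2 * x ^ 3 / (x ^ 2 + 1) ^ 2 <= 1 / 2).
    { apply Rle_div_l. nra. assert (x ^ 2 + 1 >= 4 * x) by nra.
      assert ((x ^ 2 + 1) ^ 2 >= 4 * x * (x ^ 2 + 1)) by nra. nra. }
    assert (A3 : 1 / (x - 1) <= 1 / 3) by (apply Rle_div_l; [lra| ]; lra).
    lra.
Qed.

Lemma Jb_2 : Jb 2 = 61 / 100.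
Proof. unfold Jb. simpl. field. Qed.

Lemma A1 n e : (2 <= n)%nat -> ehyp n e -> is_series (eterm n e) (RtoC 0) -> e 1%nat = 0%Z.
Proof.
  intros Hn He Hs.
  assert (Hlt : Rabs (IZR (e 1%nat)) < 2).
  { destruct (Nat.eq_dec n 2) as [Hn2|Hn2].
    -
      destruct (Im_head n e 3 Hs 0.05) as [N HN]. lra.
      specialize (HN (3 + N)%nat ltac:(lia)).
      rewrite Im_csum, rsum_add in HN.
      assert (Ht := Im_tail n e 3 N Hn He).
      assert (E0 : Im (Cmult (powb n 3) (binvpow n 1)) = - 2 * INR n).
      { rewrite <- Im_powb2. f_equal. apply (powb_binv_sub n 1 2). }
      assert (E1 : Im (Cmult (powb n 3) (binvpow n 2)) = 1).
      { rewrite <- (Im_powb1 n). f_equal. apply (powb_binv_sub n 2 1). }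
      assert (E2 : Im (Cmult (powb n 3) (binvpow n 3)) = 0).
      { rewrite <- (Im_powb0 n). f_equal. apply (powb_binv_sub n 3 0). }
      cbn [rsum] in HN. rewrite E0, E1, E2 in HN.
      assert (He2 := ehyp_R n e 2 He ltac:(lia)).
      subst n. rewrite Jb_2 in Ht. simpl INR in *.
      set (T := rsum _ N) in *.
      assert (Rabs (IZR (e 2%nat)) <= 4) by (simpl in He2; lra).
      revert HN Ht H. generalize (IZR (e 1%nat)) (IZR (e 2%nat)) T. intros a b t.
      unfold Rabs. repeat destruct Rcase_abs; intros; lra.
    - assert (Hn3 : (3 <= n)%nat) by lia.
      destruct (Im_head n e 2 Hs 0.05) as [N HN]. lra.
      specialize (HN (2 + N)%nat ltac:(lia)).
      rewrite Im_csum, rsum_add in HN.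
      assert (Ht := Im_tail n e 2 N Hn He).
      assert (E0 : Im (Cmult (powb n 2) (binvpow n 1)) = 1).
      { rewrite <- (Im_powb1 n). f_equal. apply (powb_binv_sub n 1 1). }
      assert (E1 : Im (Cmult (powb n 2) (binvpow n 2)) = 0).
      { rewrite <- (Im_powb0 n). f_equal. apply (powb_binv_sub n 2 0). }
      cbn [rsum] in HN. rewrite E0, E1 in HN.
      assert (Hb := Jb_bound3 n Hn3).
      set (T := rsum _ N) in *.
      revert HN Ht Hb. generalize (IZR (e 1%nat)) (INR n ^ 2 * Jb n) T. intros a b t.
      unfold Rabs. repeat destruct Rcase_abs; intros; lra. }
  destruct (He 1%nat (le_n _)) as [_ Hne1].
  rewrite <- abs_IZR in Hlt. apply lt_IZR in Hlt. lia.
Qed.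

Lemma partA n e : (2 <= n)%nat -> ehyp n e -> is_series (eterm n e) (RtoC 0) ->
  forall j, (1 <= j)%nat -> e j = 0%Z.
Proof.
  intros Hn. intros He Hs j Hj. destruct j as [|i]. lia. clear Hj.
  revert e He Hs. induction i as [|i IH]; intros e He Hs.
  - apply (A1 n); auto.
  - set (e' := fun j => e (S j)).
    change (e' (S i) = 0%Z). apply IH.
    + intros j Hj. apply He. lia.
    + assert (H0 := A1 n e Hn He Hs).
      assert (Hs1 : is_series (fun k => eterm n e (S k)) (RtoC 0)).
      { apply is_series_incr_1.
        match goal with |- is_series _ ?l => replace l with (RtoC 0) end.
        - exact Hs.
        - unfold eterm. rewrite H0. apply injective_projections; simpl; ring. }
      apply (is_series_scal (base n)) in Hs1.
      match type of Hs1 with is_series _ ?l => replace l with (RtoC 0) in Hs1 end.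
      2:{ apply injective_projections; simpl; ring. }
      revert Hs1. apply is_series_ext. intro k.
      unfold eterm, e'. rewrite <- (b_binv n (S k)).
      change (scal (base n) (Cmult (RtoC (IZR (e (S (S k))))) (binvpow n (S (S k)))) =
        Cmult (RtoC (IZR (e (S (S k))))) (Cmult (base n) (binvpow n (S (S k))))).
      destruct (base n), (binvpow n (S (S k))). apply injective_projections; simpl; ring.
Qed.

Definition goodset (D : list nat) (alpha : nat -> Z) (j : nat) : list nat :=
  filter (fun d => existsb (fun d' => Z.eqb (Z.of_nat d) (Z.of_nat d' + alpha j)) D) D.

Lemma card_goodset D alpha j : card_inter_shift D (alpha j) = length (goodset D alpha j).
Proof. reflexivity. Qed.

Lemma In_goodset D alpha j x : In x (goodset D alpha j) <->
  In x D /\ exists d', In d' D /\ Z.of_nat x = (Z.of_nat d' + alpha j)%Z.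
Proof.
  unfold goodset. rewrite filter_In, existsb_exists. split.
  - intros [H1 [d' [H2 H3]]]. apply Z.eqb_eq in H3. eauto.
  - intros [H1 [d' [H2 H3]]]. split; auto. exists d'. split; auto. apply Z.eqb_eq; auto.
Qed.

Fixpoint Ws (D : list nat) (alpha : nat -> Z) (k : nat) : list (list nat) :=
  match k with
  | O => nil :: nil
  | S k' => flat_map (fun w => map (fun x => w ++ x :: nil) (goodset D alpha (S k'))) (Ws D alpha k')
  end.

Lemma Ws_length D alpha k : length (Ws D alpha k) = Mk D alpha k.
Proof.
  induction k as [|k IH]; simpl. reflexivity.
  rewrite (flat_map_constant_length (c := length (goodset D alpha (S k)))).
  rewrite IH. reflexivity.
  intros x _. apply length_map.
Qed.

Lemma Ws_in D alpha (d : nat -> nat) k :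
  (forall j, (1 <= j <= k)%nat -> In (d j) (goodset D alpha j)) ->
  In (map d (seq 1 k)) (Ws D alpha k).
Proof.
  induction k as [|k IH]; intro H. simpl; auto.
  rewrite seq_S, map_app. cbn [Ws].
  change (map d ((1 + k)%nat :: nil)) with (d (S k) :: nil).
  apply in_flat_map. exists (map d (seq 1 k)).
  split. apply IH. intros j Hj. apply H. lia.
  apply (in_map (fun x => map d (seq 1 k) ++ x :: nil)). apply H. lia.
Qed.

Lemma Ws_prop D alpha k w : In w (Ws D alpha k) ->
  length w = k /\ forall j, (j < k)%nat -> In (nth j w 0%nat) (goodset D alpha (S j)).
Proof.
  revert w. induction k as [|k IH]; intros w Hw; simpl in Hw.
  - destruct Hw as [<-|[]]. split; auto. intros; lia.
  - apply in_flat_map in Hw. destruct Hw as [v [Hv Hw]]. apply in_map_iff in Hw.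
    destruct Hw as [x [<- Hx]]. destruct (IH v Hv) as [H1 H2]. split.
    + rewrite length_app. simpl. lia.
    + intros j Hj. destruct (Nat.eq_dec j k) as [->|Hjk].
      * rewrite app_nth2 by lia. rewrite H1, Nat.sub_diag. simpl. auto.
      * rewrite app_nth1 by lia. apply H2. lia.
Qed.

Lemma NoDup_flat_map_inj {A B : Type} (f : A -> list B) (l : list A) :
  NoDup l -> (forall x, NoDup (f x)) ->
  (forall x y b, In x l -> In y l -> In b (f x) -> In b (f y) -> x = y) ->
  NoDup (flat_map f l).
Proof.
  induction l as [|a l IH]; intros Hl Hf Hinj; simpl. constructor.
  inversion Hl; subst. apply NoDup_app; auto.
  - apply IH; auto. intros x y b Hx Hy. apply Hinj; simpl; auto.
  - intros b Hb Hb'. apply in_flat_map in Hb'. destruct Hb' as [y [Hy Hby]].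
    assert (a = y) by (eapply Hinj; simpl; eauto). subst. contradiction.
Qed.

Lemma Ws_NoDup D alpha k : NoDup D -> NoDup (Ws D alpha k).
Proof.
  intro HD. induction k as [|k IH]; simpl.
  - constructor. simpl; auto. constructor.
  - apply NoDup_flat_map_inj; auto.
    + intro w. apply NoDup_map_NoDup_ForallPairs.
      * intros x y _ _ Hxy. apply app_inj_tail in Hxy. tauto.
      * apply NoDup_filter; auto.
    + intros x y b _ _ Hx Hy. apply in_map_iff in Hx, Hy.
      destruct Hx as [u [<- _]]. destruct Hy as [v [Hv _]].
      apply app_inj_tail in Hv. destruct Hv; auto.
Qed.

Lemma inj_length {A : Type} (l : list A) (f : A -> nat) (m : nat) :
  NoDup l -> (forall x, In x l -> (f x < m)%nat) ->
  (forall x y, In x l -> In y l -> f x = f y -> x = y) -> (length l <= m)%nat.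
Proof.
  intros Hl Hm Hinj.
  assert (H1 : NoDup (map f l)).
  { apply NoDup_map_NoDup_ForallPairs; [|auto]. intros x y Hx Hy. apply Hinj; auto. }
  assert (H2 : incl (map f l) (seq 0 m)).
  { intros y Hy. apply in_map_iff in Hy. destruct Hy as [x [<- Hx]].
    apply in_seq. specialize (Hm x Hx). lia. }
  apply NoDup_incl_length in H2; auto. rewrite length_map, length_seq in H2. auto.
Qed.

Lemma csum_Cmod (u : nat -> C) m : Cmod (csum u m) <= rsum (fun j => Cmod (u j)) m.
Proof.
  induction m as [|m IH]; cbn [csum rsum].
  - rewrite Cmod_0. lra.
  - eapply Rle_trans. apply Cmod_triangle. lra.
Qed.

Lemma series_bound (u : nat -> C) l B : is_series u l -> (forall m, Cmod (csum u m) <= B) -> Cmod l <= B.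
Proof.
  intros Hs HB. apply le_epsilon. intros eps He.
  destruct (series_conv u l Hs eps He) as [N HN]. specialize (HN N (le_n _)).
  specialize (HB N).
  assert (Cmod l <= Cmod (Cminus l (csum u N)) + Cmod (csum u N)).
  { replace l with (Cplus (Cminus l (csum u N)) (csum u N)) at 1. apply Cmod_triangle.
    apply injective_projections; simpl; ring. }
  lra.
Qed.

Lemma rsum_zero (f : nat -> R) k : (forall j, (j < k)%nat -> f j = 0) -> rsum f k = 0.
Proof. induction k; intro H; simpl. auto. rewrite IHk, H; auto; lra. Qed.

Lemma tail_bound (u : nat -> C) l (r B : R) k : 1 < r -> 0 <= B -> is_series u l ->
  (forall j, (j < k)%nat -> u j = RtoC 0) ->
  (forall j, Cmod (u j) <= B / r ^ (S j)) ->
  Cmod l <= (B / (r - 1)) / r ^ k.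
Proof.
  intros Hr HB Hs H0 Hb. apply (series_bound u l); auto. intro m.
  eapply Rle_trans. apply csum_Cmod.
  set (f := fun j => Cmod (u j)).
  assert (Hf : forall j, 0 <= f j) by (intro; apply Cmod_ge_0).
  assert (H1 : rsum f m <= rsum f (k + m)).
  { rewrite Nat.add_comm, rsum_add. assert (0 <= rsum (fun j => f (m + j)%nat) k) by (apply rsum_nonneg; auto). lra. }
  eapply Rle_trans. apply H1. rewrite rsum_add.
  rewrite rsum_zero. 2:{ intros j Hj. unfold f. rewrite H0; auto. apply Cmod_0. }
  assert (Hrk : 0 < r ^ k) by (apply pow_lt; lra).
  eapply Rle_trans. apply Rplus_le_compat_l.
  apply rsum_le with (g := fun j => (B / r ^ (S k)) * (/ r) ^ j).
  { intro j. unfold f. eapply Rle_trans. apply Hb.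
    rewrite pow_inv. replace (S (k + j)) with (S k + j)%nat by lia. rewrite pow_add.
    right. field. split; apply pow_nonzero; lra. }
  rewrite rsum_scal.
  assert (Hg := rsum_geom (/ r) m). 
  assert (Hq : 0 <= / r < 1).
  { split. apply Rlt_le, Rinv_0_lt_compat; lra. rewrite <- Rinv_1. apply Rinv_lt_contravar; lra. }
  specialize (Hg Hq).
  assert (HBk : 0 <= B / r ^ S k) by (apply Rdiv_le_0_compat; auto; apply pow_lt; lra).
  assert (E : B / r ^ S k * / (1 - / r) = B / (r - 1) / r ^ k).
  { simpl. assert (r ^ k <> 0) by (apply pow_nonzero; lra). field. repeat split; lra. }
  assert (B / r ^ S k * rsum (fun k0 : nat => (/ r) ^ k0) m <= B / r ^ S k * / (1 - / r))
    by (apply Rmult_le_compat_l; auto).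
  change (rsum (pow (/ r)) m) with (rsum (fun k0 : nat => (/ r) ^ k0) m). lra.
Qed.

Lemma csum_const_after (u : nat -> C) k m : (forall j, (k <= j)%nat -> u j = RtoC 0) ->
  (k <= m)%nat -> csum u m = csum u k.
Proof.
  intros H Hkm. induction Hkm as [|m Hkm IH]. auto.
  cbn [csum]. rewrite IH, H by auto. apply injective_projections; simpl; ring.
Qed.

Lemma series_finite (u : nat -> C) l k : is_series u l ->
  (forall j, (k <= j)%nat -> u j = RtoC 0) -> l = csum u k.
Proof.
  intros Hs H.
  assert (Hz : Cmod (Cminus l (csum u k)) = 0).
  { apply Rle_antisym. 2: apply Cmod_ge_0. apply le_epsilon. intros eps He.
    destruct (series_conv u l Hs eps He) as [N HN]. specialize (HN (Nat.max N k) ltac:(lia)).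
    rewrite (csum_const_after u k) in HN; auto; try lia. lra. }
  apply Cmod_eq_0 in Hz. 
  replace l with (Cplus (Cminus l (csum u k)) (csum u k)). rewrite Hz.
  apply injective_projections; simpl; ring.
  apply injective_projections; simpl; ring.
Qed.

Definition dterm (n : nat) (d : nat -> nat) (k : nat) : C :=
  Cmult (RtoC (INR (d (S k)))) (binvpow n (S k)).

Lemma Cmod_dterm n d k : Cmod (dterm n d k) = INR (d (S k)) / rho n ^ (S k).
Proof.
  unfold dterm. rewrite Cmod_mult, Cmod_R, Cmod_binv, Rabs_right. reflexivity.
  apply Rle_ge, pos_INR.
Qed.

Lemma ex_series_dterm n d B : (2 <= n)%nat -> (forall j, INR (d (S j)) <= B) -> ex_series (dterm n d).
Proof.
  intros Hn HB.
  assert (Hr : 1 < rho n) by (assert (H := rho_gt n Hn); apply (le_INR 2) in Hn; simpl in Hn; lra).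
  assert (HB0 : 0 <= B) by (specialize (HB 0%nat); assert (H := pos_INR (d 1%nat)); lra).
  apply (@ex_series_le C_AbsRing C_CompleteNormedModule (dterm n d) (fun j => B * (/ rho n) ^ j)).
  - intro j. change (norm (dterm n d j)) with (Cmod (dterm n d j)). rewrite Cmod_dterm.
    rewrite pow_inv. simpl pow at 1.
    assert (Hp : 0 < rho n ^ j) by (apply pow_lt; lra).
    apply Rle_div_l. apply Rmult_lt_0_compat; lra.
    assert (H := HB j). assert (H2 := pos_INR (d (S j))).
    replace (B * / rho n ^ j * (rho n * rho n ^ j)) with (B * rho n) by (field; lra).
    nra.
  - exists (B * (/ (1 - / rho n))). apply (@is_series_scal R_AbsRing R_NormedModule B (fun j => (/ rho n) ^ j)). apply is_series_geom.
    rewrite Rabs_right. rewrite <- Rinv_1. apply Rinv_lt_contravar; lra.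
    apply Rle_ge, Rlt_le, Rinv_0_lt_compat; lra.
Qed.

Fixpoint Hor (n : nat) (u : nat -> Z) (k : nat) : Z * Z :=
  match k with
  | O => (0%Z, 0%Z)
  | S k' => let (x, y) := Hor n u k' in
      ((- Z.of_nat n * x - y + u (S k'))%Z, (x - Z.of_nat n * y)%Z)
  end.

Lemma Hor_val n u k :
  (IZR (fst (Hor n u k)), IZR (snd (Hor n u k))) = Cmult (powb n k) (csum (eterm n u) k).
Proof.
  induction k as [|k IH].
  - simpl. apply injective_projections; simpl; ring.
  - cbn [csum Hor]. destruct (Hor n u k) as [x y] eqn:E. simpl in IH.
    assert (R1 : Cmult (powb n (S k)) (Cplus (csum (eterm n u) k) (eterm n u k)) =
      Cplus (Cmult (base n) (Cmult (powb n k) (csum (eterm n u) k)))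
            (Cmult (RtoC (IZR (u (S k)))) (Cmult (powb n (S k)) (binvpow n (S k))))).
    { rewrite powb_S. unfold eterm. ring. }
    rewrite R1, <- IH, powb_binv. cbn [fst snd].
    rewrite !plus_IZR, !minus_IZR, !mult_IZR, opp_IZR, <- INR_IZR_INZ.
    unfold base. apply injective_projections; simpl; ring.
Qed.

Lemma Hor_zero n u k : (forall j, (1 <= j <= k)%nat -> (Z.abs (u j) <= Z.of_nat (n * n))%Z) ->
  Hor n u k = (0%Z, 0%Z) -> forall j, (1 <= j <= k)%nat -> u j = 0%Z.
Proof.
  induction k as [|k IH]; intros Hb H0 j Hj. lia.
  cbn [Hor] in H0. destruct (Hor n u k) as [x y] eqn:E.
  injection H0 as H1 H2.
  assert (Hu := Hb (S k) ltac:(lia)). rewrite Nat2Z.inj_mul in Hu.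
  set (N := Z.of_nat n) in *. set (U := u (S k)) in *.
  assert (Hx : x = (N * y)%Z) by lia. subst x.
  assert (HU : U = ((N * N + 1) * y)%Z) by lia.
  assert (Hy : y = 0%Z).
  { destruct (Z.eq_dec y 0) as [|Hy]; auto. exfalso. rewrite HU in Hu.
    assert (0 <= N)%Z by (unfold N; lia). rewrite Z.abs_mul in Hu.
    rewrite (Z.abs_eq (N * N + 1)) in Hu by nia. assert (1 <= Z.abs y)%Z by lia. nia. }
  subst y. destruct (Nat.eq_dec j (S k)) as [->|Hjk].
  - fold U. lia.
  - apply IH; [intros; apply Hb; lia | f_equal; lia | lia].
Qed.

Lemma sep n u k : (2 <= n)%nat ->
  (forall j, (1 <= j <= k)%nat -> (Z.abs (u j) <= Z.of_nat (n * n))%Z) ->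
  (exists j, (1 <= j <= k)%nat /\ u j <> 0%Z) ->
  / rho n ^ k <= Cmod (csum (eterm n u) k).
Proof.
  intros Hn Hb [j [Hj Hu]].
  assert (Hnz : Hor n u k <> (0%Z, 0%Z)) by (intro H; apply Hu; eapply Hor_zero; eauto).
  assert (H1 : 1 <= Cmod (Cmult (powb n k) (csum (eterm n u) k))).
  { rewrite <- Hor_val. destruct (Hor n u k) as [x y]. cbn [fst snd].
    eapply Rle_trans. 2: apply Rmax_Cmod. cbn [fst snd].
    destruct (Z.eq_dec x 0) as [->|Hx].
    - assert (y <> 0%Z) by (intro; subst; apply Hnz; auto).
      eapply Rle_trans. 2: apply Rmax_r. rewrite <- abs_IZR. apply (IZR_le 1). lia.
    - eapply Rle_trans. 2: apply Rmax_l. rewrite <- abs_IZR. apply (IZR_le 1). lia. }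
  rewrite Cmod_mult, Cmod_powb in H1.
  assert (Hr : 0 < rho n) by (assert (H := rho_gt n Hn); apply (le_INR 2) in Hn; simpl in Hn; lra).
  assert (Hp : 0 < rho n ^ k) by (apply pow_lt; lra).
  apply (Rmult_le_reg_l (rho n ^ k)); auto. rewrite Rinv_r; lra.
Qed.

Definition valid (D : list nat) (alpha : nat -> Z) (d : nat -> nat) : Prop :=
  forall j, (1 <= j)%nat -> In (d j) (goodset D alpha j).

Lemma half_le n : (2 * (n * n / 2) <= n * n)%nat.
Proof. apply Nat.Div0.mul_div_le. Qed.

Lemma F_to_valid n D alpha a z :
  (2 <= n)%nat ->
  (forall d, In d D -> (d <= Nat.div (n * n) 2)%nat) ->
  (forall x y, in_diffset D x -> in_diffset D y -> Z.abs (x - y) <> 1%Z) ->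
  (forall j, (1 <= j)%nat -> in_diffset D (alpha j)) ->
  is_series (fun k => Cmult (RtoC (IZR (alpha (S k)))) (binvpow n (S k))) a ->
  attractor n D z -> attractor n D (Cminus z a) ->
  exists d, valid D alpha d /\ is_series (dterm n d) z.
Proof.
  intros Hn Hbd Hdiff Halpha Ha [d [Hd Hsd]] [d' [Hd' Hsd']].
  set (e := fun j => (Z.of_nat (d j) - Z.of_nat (d' j) - alpha j)%Z).
  assert (Hs : is_series (eterm n e) (RtoC 0)).
  { assert (H1 := is_series_minus _ _ _ _ Hsd Hsd').
    assert (H2 := is_series_minus _ _ _ _ H1 Ha).
    match type of H2 with is_series _ ?l => replace l with (RtoC 0) in H2 end.
    2:{ apply injective_projections; simpl; ring. }
    revert H2. apply is_series_ext. intro k. unfold eterm, e.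
    rewrite !minus_IZR, <- !INR_IZR_INZ.
    destruct (binvpow n (S k)). apply injective_projections; simpl; ring. }
  assert (He : ehyp n e).
  { intros j Hj. specialize (Hd j Hj). specialize (Hd' j Hj).
    assert (Ha1 := Halpha j Hj).
    destruct Ha1 as [p [q [Hp [Hq Hpq]]]].
    assert (B1 := Hbd _ Hd). assert (B2 := Hbd _ Hd'). assert (B3 := Hbd _ Hp). assert (B4 := Hbd _ Hq).
    assert (Hh := half_le n).
    split.
    - unfold e. rewrite Hpq. rewrite Nat2Z.inj_mul.
      set (h := (n * n / 2)%nat) in *.
      assert (Z.of_nat (2 * h) <= Z.of_nat (n * n))%Z by lia. rewrite Nat2Z.inj_mul in H. lia.
    - unfold e. replace (Z.of_nat (d j) - Z.of_nat (d' j) - alpha j)%Z with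
        ((Z.of_nat (d j) - Z.of_nat (d' j)) - alpha j)%Z by ring.
      apply Hdiff; [exists (d j), (d' j); auto | exists p, q; auto]. }
  assert (Hz := partA n e Hn He Hs).
  exists d. split; auto.
  intros j Hj. apply In_goodset. split; auto. exists (d' j). split; auto.
  specialize (Hz j Hj). unfold e in Hz. lia.
Qed.

Lemma valid_to_F n D alpha a d z :
  is_series (fun k => Cmult (RtoC (IZR (alpha (S k)))) (binvpow n (S k))) a ->
  valid D alpha d -> is_series (dterm n d) z ->
  attractor n D z /\ attractor n D (Cminus z a).
Proof.
  intros Ha Hv Hs. split.
  - exists d. split; auto. intros j Hj. apply (In_goodset D alpha j). auto.
  - exists (fun j => Z.to_nat (Z.of_nat (d j) - alpha j)). split.
    + intros j Hj. destruct (proj1 (In_goodset D alpha j (d j)) (Hv j Hj)) as [_ [w [Hw Hwe]]].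
      replace (Z.to_nat (Z.of_nat (d j) - alpha j)) with w by lia. auto.
    + assert (H1 := is_series_minus _ _ _ _ Hs Ha).
      match type of H1 with is_series _ ?l => replace l with (Cminus z a) in H1 end.
      2:{ reflexivity. }
      revert H1. apply is_series_ext. intro k. unfold dterm.
      destruct (proj1 (In_goodset D alpha (S k) (d (S k))) (Hv (S k) ltac:(lia))) as [_ [w [Hw Hwe]]].
      rewrite (INR_IZR_INZ (Z.to_nat _)). rewrite Z2Nat.id by lia.
      rewrite minus_IZR, <- INR_IZR_INZ.
      destruct (binvpow n (S k)). apply injective_projections; simpl; ring.
Qed.

Lemma valid_bound n D alpha d j : (forall x, In x D -> (x <= Nat.div (n * n) 2)%nat) ->
  valid D alpha d -> (1 <= j)%nat -> INR (d j) <= INR n ^ 2.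
Proof.
  intros Hbd Hv Hj. destruct (proj1 (In_goodset D alpha j (d j)) (Hv j Hj)) as [H _].
  assert (H1 := Hbd _ H). assert (H2 := half_le n).
  assert (H3 : (d j <= n * n)%nat) by lia. apply le_INR in H3. rewrite mult_INR in H3. simpl. lra.
Qed.

Lemma map_seq_eq (d d' : nat -> nat) s k : map d (seq s k) = map d' (seq s k) ->
  forall j, (s <= j < s + k)%nat -> d j = d' j.
Proof.
  revert s. induction k as [|k IH]; intros s H j Hj. lia.
  simpl in H. injection H as H1 H2. destruct (Nat.eq_dec j s) as [->|Hjs]; auto.
  apply (IH (S s)); auto. lia.
Qed.

Lemma goodset_nonempty D alpha j : in_diffset D (alpha j) -> (0 < length (goodset D alpha j))%nat.
Proof.
  intros [p [q [Hp [Hq Hpq]]]].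
  assert (In p (goodset D alpha j)).
  { apply In_goodset. split; auto. exists q. split; auto. lia. }
  destruct (goodset D alpha j). contradiction. simpl. lia.
Qed.

Lemma rho_gt1 n : (2 <= n)%nat -> 1 < rho n.
Proof. intro Hn. assert (H := rho_gt n Hn). apply (le_INR 2) in Hn. simpl in Hn. lra. Qed.

Lemma upper_cover n D alpha a k :
  (2 <= n)%nat ->
  (forall d, In d D -> (d <= Nat.div (n * n) 2)%nat) ->
  (forall x y, in_diffset D x -> in_diffset D y -> Z.abs (x - y) <> 1%Z) ->
  (forall j, (1 <= j)%nat -> in_diffset D (alpha j)) ->
  is_series (fun k => Cmult (RtoC (IZR (alpha (S k)))) (binvpow n (S k))) a ->
  covered_by (fun z => attractor n D z /\ attractor n D (Cminus z a)) (Mk D alpha k)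
    ((INR n ^ 2 / (rho n - 1)) / rho n ^ k).
Proof.
  intros Hn Hbd Hdiff Halpha Ha.
  exists (fun i z => exists d, valid D alpha d /\ is_series (dterm n d) z /\
     map d (seq 1 k) = nth i (Ws D alpha k) nil).
  split.
  - intros i Hi x y [d [Hv [Hs Hm]]] [d' [Hv' [Hs' Hm']]].
    rewrite <- Hm' in Hm. assert (Hag := map_seq_eq d d' 1 k Hm).
    assert (H1 := is_series_minus _ _ _ _ Hs Hs').
    change (Cmod (plus x (opp y)) <= INR n ^ 2 / (rho n - 1) / rho n ^ k).
    apply (tail_bound (fun j => plus (dterm n d j) (opp (dterm n d' j))) (plus x (opp y)) (rho n) (INR n ^ 2) k (rho_gt1 n Hn)).
    + apply pow_le, pos_INR.
    + exact H1.
    + intros j Hj. unfold dterm. rewrite (Hag (S j)) by lia.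
      apply injective_projections; simpl; ring.
    + intro j. change (Cmod (Cminus (dterm n d j) (dterm n d' j)) <= INR n ^ 2 / rho n ^ S j).
      unfold dterm.
      replace (Cminus (Cmult (RtoC (INR (d (S j)))) (binvpow n (S j)))
                      (Cmult (RtoC (INR (d' (S j)))) (binvpow n (S j))))
        with (Cmult (RtoC (INR (d (S j)) - INR (d' (S j)))) (binvpow n (S j))).
      2:{ destruct (binvpow n (S j)). apply injective_projections; simpl; ring. }
      rewrite Cmod_mult, Cmod_R, Cmod_binv.
      assert (B1 := valid_bound n D alpha d (S j) Hbd Hv ltac:(lia)).
      assert (B2 := valid_bound n D alpha d' (S j) Hbd Hv' ltac:(lia)).
      assert (P1 := pos_INR (d (S j))). assert (P2 := pos_INR (d' (S j))).
      assert (Hr := rho_gt1 n Hn). assert (Hp : 0 < rho n ^ S j) by (apply pow_lt; lra).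
      unfold Rdiv. apply Rmult_le_compat_r. apply Rlt_le, Rinv_0_lt_compat; auto.
      unfold Rabs. destruct Rcase_abs; lra.
  - intros z [Hz1 Hz2].
    destruct (F_to_valid n D alpha a z Hn Hbd Hdiff Halpha Ha Hz1 Hz2) as [d [Hv Hs]].
    assert (Hin : In (map d (seq 1 k)) (Ws D alpha k)).
    { apply Ws_in. intros j Hj. apply Hv. lia. }
    destruct (In_nth _ _ nil Hin) as [i [Hi Hni]].
    exists i. split. rewrite <- Ws_length. auto.
    exists d. auto.
Qed.

Lemma lower_bound n D alpha a k m delta :
  (2 <= n)%nat -> NoDup D ->
  (forall d, In d D -> (d <= Nat.div (n * n) 2)%nat) ->
  (forall j, (1 <= j)%nat -> in_diffset D (alpha j)) ->
  is_series (fun k => Cmult (RtoC (IZR (alpha (S k)))) (binvpow n (S k))) a ->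
  delta < / rho n ^ k ->
  covered_by (fun z => attractor n D z /\ attractor n D (Cminus z a)) m delta ->
  (Mk D alpha k <= m)%nat.
Proof.
  intros Hn HD Hbd Halpha Ha Hdk [U [Hdiam Hcov]].
  set (cdig := fun j => nth 0 (goodset D alpha j) 0%nat).
  set (dw := fun (w : list nat) j => if (j <=? k)%nat then nth (j - 1) w 0%nat else cdig j).
  assert (Hcd : forall j, (1 <= j)%nat -> In (cdig j) (goodset D alpha j)).
  { intros j Hj. apply nth_In. apply goodset_nonempty. auto. }
  assert (Hvw : forall w, In w (Ws D alpha k) -> valid D alpha (dw w)).
  { intros w Hw j Hj. unfold dw. destruct (Nat.leb_spec j k).
    - destruct (Ws_prop D alpha k w Hw) as [_ H2].
      replace j with (S (j - 1)) at 2 by lia. apply H2. lia.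
    - apply Hcd; auto. }
  assert (Hq : forall w, exists z, In w (Ws D alpha k) -> is_series (dterm n (dw w)) z).
  { intro w. destruct (classic (In w (Ws D alpha k))) as [Hw|Hw].
    - destruct (ex_series_dterm n (dw w) (INR n ^ 2) Hn) as [z Hz].
      + intro j. apply (valid_bound n D alpha); auto. lia.
      + exists z. auto.
    - exists (RtoC 0). intro; contradiction. }
  set (q := fun w => proj1_sig (constructive_indefinite_description _ (Hq w))).
  assert (Hqs : forall w, In w (Ws D alpha k) -> is_series (dterm n (dw w)) (q w)).
  { intros w Hw. unfold q. destruct (constructive_indefinite_description _ (Hq w)). simpl. auto. }
  assert (Hi : forall w, exists i, In w (Ws D alpha k) -> (i < m)%nat /\ U i (q w)).
  { intro w. destruct (classic (In w (Ws D alpha k))) as [Hw|Hw].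
    - assert (HF : attractor n D (q w) /\ attractor n D (Cminus (q w) a))
        by (apply (valid_to_F n D alpha a (dw w) (q w) Ha (Hvw w Hw) (Hqs w Hw))).
      destruct (Hcov (q w) HF) as [i Hi].
      exists i. auto.
    - exists 0%nat. intro; contradiction. }
  set (f := fun w => proj1_sig (constructive_indefinite_description _ (Hi w))).
  assert (Hf : forall w, In w (Ws D alpha k) -> (f w < m)%nat /\ U (f w) (q w)).
  { intros w Hw. unfold f. destruct (constructive_indefinite_description _ (Hi w)). simpl. auto. }
  rewrite <- Ws_length. apply (inj_length _ f m).
  - apply Ws_NoDup; auto.
  - intros w Hw. apply Hf; auto.
  - intros w w' Hw Hw' Hff.
    destruct (Hf w Hw) as [Hm1 HU1]. destruct (Hf w' Hw') as [Hm2 HU2].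
    rewrite Hff in HU1.
    assert (Hcl := Hdiam (f w') Hm2 (q w) (q w') HU1 HU2).
    destruct (classic (w = w')) as [|Hne]; auto. exfalso.
    destruct (Ws_prop D alpha k w Hw) as [Hl1 Hn1].
    destruct (Ws_prop D alpha k w' Hw') as [Hl2 Hn2].
    assert (Hex : exists i, (i < k)%nat /\ nth i w 0%nat <> nth i w' 0%nat).
    { apply NNPP. intro Hno. apply Hne. apply (nth_ext _ _ 0%nat 0%nat). congruence.
      intros i Hi'. apply NNPP. intro Hneq. apply Hno. exists i. split; auto. lia. }
    destruct Hex as [i [Hik Hneq]].
    set (u := fun j => (Z.of_nat (dw w j) - Z.of_nat (dw w' j))%Z).
    assert (H1 := is_series_minus _ _ _ _ (Hqs w Hw) (Hqs w' Hw')).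
    assert (H2 : is_series (eterm n u) (Cminus (q w) (q w'))).
    { revert H1. apply is_series_ext. intro j. unfold eterm, dterm, u.
      rewrite minus_IZR, <- !INR_IZR_INZ.
      destruct (binvpow n (S j)). apply injective_projections; simpl; ring. }
    assert (H3 := series_finite _ _ k H2).
    rewrite H3 in Hcl.
    - assert (H4 : / rho n ^ k <= Cmod (csum (eterm n u) k)).
      { apply sep; auto.
        - intros j Hj. unfold u.
          assert (B1 := valid_bound n D alpha (dw w) j Hbd (Hvw w Hw) ltac:(lia)).
          assert (B2 := valid_bound n D alpha (dw w') j Hbd (Hvw w' Hw') ltac:(lia)).
          assert (C1 : (dw w j <= n * n)%nat).
          { apply INR_le. rewrite mult_INR. simpl in B1. lra. }
          assert (C2 : (dw w' j <= n * n)%nat).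
          { apply INR_le. rewrite mult_INR. simpl in B2. lra. }
          lia.
        - exists (S i). split. lia. unfold u, dw.
          destruct (Nat.leb_spec (S i) k); [|lia].
          replace (S i - 1)%nat with i by lia. lia. }
      lra.
    - intros j Hj. unfold eterm, u, dw.
      destruct (Nat.leb_spec (S j) k); [lia|].
      rewrite Z.sub_diag. apply injective_projections; simpl; ring.
Qed.

Theorem theorem4p5 (n : nat) (D : list nat) (alpha : nat -> Z) (a : Complex.C) :
  (2 <= n)%nat ->
  NoDup D ->
  (forall d, In d D -> (d <= Nat.div (n * n) 2)%nat) ->
  (forall x y, in_diffset D x -> in_diffset D y -> Z.abs (x - y) <> 1%Z) ->
  (forall j, (1 <= j)%nat -> in_diffset D (alpha j)) ->
  is_series (fun k => Cmult (RtoC (IZR (alpha (S k)))) (binvpow n (S k))) a ->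
  lower_box_dim (fun z => attractor n D z /\ attractor n D (Cminus z a)) =
  LimInf_seq (fun k => ln (INR (Mk D alpha k)) / (INR k * ln (Cmod (base n)))).
Proof.
  intros Hn HD Hbd Hdiff Halpha Ha.
  assert (Hr := rho_gt1 n Hn).
  assert (Hcard : forall j, (1 <= j)%nat -> (1 <= card_inter_shift D (alpha j) <= length D)%nat).
  { intros j Hj. rewrite card_goodset. split.
    - apply goodset_nonempty; auto.
    - apply filter_length_le. }
  apply (dim_abstract _ (Mk D alpha) (Cmod (base n)) (INR n ^ 2 / (rho n - 1)) (INR (length D))).
  - exact Hr.
  - apply Rdiv_lt_0_compat. apply pow_lt. apply (lt_INR 0); lia. lra.
  - apply (le_INR 1). destruct (Hcard 1%nat (le_n _)). lia.
  - induction k as [|k IH]; simpl. lia. destruct (Hcard (S k)); [lia|]. nia.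
  - induction k as [|k IH]; simpl Mk. simpl. lra.
    rewrite mult_INR. simpl pow. rewrite Rmult_comm.
    apply Rmult_le_compat; try apply pos_INR; auto.
    apply le_INR. apply Hcard. lia.
  - intro k. apply upper_cover; auto.
  - intros k m delta Hd Hc. eapply lower_bound; eauto.
Qed.
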